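(* MUDAN (for any admissible priority rule) is incentive compatible: for every true profile $\theta$, every buyer $i$, every global profile $\theta'$ and every report $\theta''_i=(v''_i,r''_i)$ with $r''_i\subseteq r_i$, we have $u_i(\theta_i,\theta'_{-i})\ge u_i(\theta''_i,\theta''_{-i})$, where $\theta''_{-i}$ is obtained from $\theta'_{-i}$ by replacing by the silent report $(0,\varnothing)$ the report of every buyer that is not reachable from $s$ in the profile graph when $i$ reports $\theta''_i$.
   Context: Single-demand model. A seller $s$ has $m\ge 1$ identical items. Buyers $B=\{1,\dots,n\}$; each buyer $i$ wants at most one item and has a private true profile $\theta_i=(v_i,r_i)$, where $v_i\in\mathbb{R}_{\ge 0}$ is its valuation and $r_i\subseteq B$ its set of out-neighbours. The seller has a fixed, publicly known neighbour set $r_s\subseteq B$, and every buyer is reachable from $s$ in the directed graph with edges $(x,y)$ for $y\in r_x$. A buyer reports $\theta'_i=(v'_i,r'_i)$ with $v'_i\in\mathbb{R}_{\ge0}$ and $r'_i\subseteq r_i$. A global profile $\theta'=(\theta'_1,\dots,\theta'_n)$ determines the profile graph $G_{\theta'}$ on $\{s\}\cup B$ with an edge $(x,y)$ iff $y\in r'_x$ (for $x=s$ use $r_s$). Only buyers reachable from $s$ in $G_{\theta'}$ take part; an unreachable buyer is treated as having the silent report $(0,\varnothing)$ and gets no item and zero payment. A mechanism maps each global profile $\theta'$ to an allocation $\pi(\theta')\in\{0,1\}^n$ and payments $p(\theta')\in\mathbb{R}^n$. Utility: $u_i(\theta')=v_i\pi_i(\theta')-p_i(\theta')$ (true valuation).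 Priority rule: each buyer $i$ is given a priority $\sigma_i$ that is a function of its reported neighbour set $r'_i$ only (e.g. $\sigma_i=|r'_i|$), independent of all reported valuations and non-decreasing with respect to inclusion of $r'_i$; ties are broken by a fixed total order on buyers. MUDAN, run on a reported profile $\theta'$. It maintains an explored set $A\subseteq B$, a winner set $W\subseteq A$, remaining supply $m'=m-|W|$, and tentative payments. For current $A,W$ the potential-winner set $P(A,W)$ is: $P=A$ if $|A\setminus W|\le m'$; otherwise $P=W\cup\{$the $m'$ buyers of $A\setminus W$ with highest reported valuations$\}$ (ties broken by a fixed total order). Buyers in $A\setminus P$ are called exhausted. Initialise $A=r_s$, $W=\varnothing$, and repeat: (1) Closure: while some buyer $x\in W\cup(A\setminus P(A,W))$ (with $P$ recomputed from the current $A,W$) has $r'_x\not\subseteq A$, set $A\leftarrow A\cup r'_x$. (2) Let $P=P(A,W)$; if $P\setminus W=\varnothing$, stop. (3) Let $w$ be the buyer of $P\setminus W$ with highest priority; set its tentative payment $\hat p_w$ to the $(m'+1)$-th highest reported valuation in $A\setminus W$ (current $m'$, before adding $w$), or $0$ if $|A\setminus W|\le m'$; add $w$ to $W$. Output: every $w\in W$ gets $\pi_w=1$, $p_w=\hat p_w$; every other buyer gets $\pi_i=0$, $p_i=0$. *)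

(* Defs.v *)
From HB Require Import structures.
From mathcomp Require Import all_boot all_order all_algebra.
Set Implicit Arguments. Unset Strict Implicit. Unset Printing Implicit Defensive.
Import Order.TTheory GRing.Theory Num.Theory.
Local Open Scope ring_scope.

Section Mudan.
Variables (R : realDomainType) (n : nat).

(* buyers are 'I_n; a report is (valuation, reported out-neighbour set) *)
Definition report := (R * {set 'I_n})%type.
Definition profile := 'I_n -> report.
Definition silent : report := (0, set0).

Definition upd (p : profile) (i : 'I_n) (x : report) : profile :=
  fun j => if j == i then x else p j.

(* buyers reachable from the seller s (with neighbour set rs) in the profile
   graph G_p: iterate "rs plus out-neighbours of the current set" *)
Definition reach_step (rs : {set 'I_n}) (p : profile) (X : {set 'I_n}) :
  {set 'I_n} := rs :|: \bigcup_(x in X) (p x).2.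
Definition reachable (rs : {set 'I_n}) (p : profile) : {set 'I_n} :=
  iter n.+1 (reach_step rs p) set0.

Definition silence_unreach (rs : {set 'I_n}) (p : profile) (i : 'I_n) : profile :=
  fun j => if (j == i) || (j \in reachable rs p) then p j else silent.

Definition vbeats (p : profile) (y x : 'I_n) : bool :=
  ((p x).1 < (p y).1) || (((p y).1 == (p x).1) && (y < x)%N).

Definition topk (p : profile) (k : nat) (S : {set 'I_n}) : {set 'I_n} :=
  [set x in S | (#|[set y in S | vbeats p y x]| < k)%N].

(* the (k+1)-th highest reported valuation in S (0 if it does not exist) *)
Definition kth_val (p : profile) (k : nat) (S : {set 'I_n}) : R :=
  match [pick y in S | #|[set z in S | vbeats p z y]| == k] with
  | Some y => (p y).1
  | None => 0
  end.

(* potential-winner set P(A,W), with remaining supply m - |W| *)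
Definition potential (p : profile) (m : nat) (A W : {set 'I_n}) : {set 'I_n} :=
  let m' := (m - #|W|)%N in
  if (#|A :\: W| <= m')%N then A else W :|: topk p m' (A :\: W).

(* buyers whose neighbours are to be explored: winners and exhausted buyers *)
Definition to_expand (p : profile) (m : nat) (A W : {set 'I_n}) : {set 'I_n} :=
  W :|: (A :\: potential p m A W).

(* closure step (1); each iteration adds a new buyer, so fuel n.+1 suffices *)
Fixpoint closure (fuel : nat) (p : profile) (m : nat) (A W : {set 'I_n}) :
  {set 'I_n} :=
  match fuel with
  | 0 => A
  | f.+1 =>
    match [pick x in to_expand p m A W | ~~ ((p x).2 \subset A)] with
    | Some x => closure f p m (A :|: (p x).2) W
    | None => A
    end
  end.

Definition pbeats (prio : {set 'I_n} -> nat) (p : profile) (x y : 'I_n) : bool :=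
  (prio (p y).2 < prio (p x).2)%N || ((prio (p x).2 == prio (p y).2) && (x < y)%N).

Definition top_prio (prio : {set 'I_n} -> nat) (p : profile) (S : {set 'I_n}) :
  option 'I_n :=
  [pick x in S | [forall y in S, (y == x) || pbeats prio p x y]].

(* main loop; each iteration adds a new winner, so fuel n.+1 suffices.
   Returns the winner set and tentative payments. *)
Fixpoint mudan_loop (fuel : nat) (prio : {set 'I_n} -> nat) (p : profile)
  (m : nat) (A W : {set 'I_n}) (pay : 'I_n -> R) : {set 'I_n} * ('I_n -> R) :=
  match fuel with
  | 0 => (W, pay)
  | f.+1 =>
    let A1 := closure n.+1 p m A W in
    let P := potential p m A1 W in
    match top_prio prio p (P :\: W) with
    | None => (W, pay)
    | Some w =>
      let m' := (m - #|W|)%N in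
      let price := if (#|A1 :\: W| <= m')%N then 0 else kth_val p m' (A1 :\: W) in
      mudan_loop f prio p m A1 (w |: W) (fun j => if j == w then price else pay j)
    end
  end.

Definition mudan (prio : {set 'I_n} -> nat) (rs : {set 'I_n}) (m : nat)
  (p : profile) : ('I_n -> bool) * ('I_n -> R) :=
  let res := mudan_loop n.+1 prio p m rs set0 (fun _ => 0) in
  (fun j => j \in res.1, fun j => if j \in res.1 then res.2 j else 0).

Definition utility (vi : R) (i : 'I_n) (out : ('I_n -> bool) * ('I_n -> R)) : R :=
  (if out.1 i then vi else 0) - out.2 i.

End Mudan.

(* Main.v *)
Require Import Defs.
From HB Require Import structures.
From mathcomp Require Import all_boot all_order all_algebra.
From mathcomp Require Import zify.
Import Order.TTheory GRing.Theory Num.Theory.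
Local Open Scope ring_scope.
Set Implicit Arguments. Unset Strict Implicit. Unset Printing Implicit Defensive.

Section Gen.
Variable n : nat.
Variable lt : rel 'I_n.
Hypothesis lt_irr : forall x, ~~ lt x x.
Hypothesis lt_trans : forall x y z, lt x y -> lt y z -> lt x z.
Hypothesis lt_total : forall x y, x != y -> lt x y || lt y x.

Definition rk (S : {set 'I_n}) x := #|[set z in S | lt z x]|.

Lemma rk_lt (S : {set 'I_n}) (x y : 'I_n) : x \in S -> lt x y -> (rk S x < rk S y)%N.
Proof.
move=> xS lxy; rewrite /rk; apply: proper_card; apply/properP; split.
  apply/subsetP=> z; rewrite !inE => /andP[-> lzx]; exact: lt_trans lzx lxy.
by exists x; rewrite !inE ?xS ?lxy ?lt_irr.
Qed.

Lemma rk_bound (S : {set 'I_n}) x : x \in S -> (rk S x < #|S|)%N.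
Proof.
move=> xS; rewrite /rk; apply: proper_card; apply/properP; split.
  by apply/subsetP=> z; rewrite inE => /andP[].
by exists x; rewrite ?inE ?xS ?lt_irr.
Qed.

Lemma rk_exists (S : {set 'I_n}) k : (k < #|S|)%N -> exists2 y, y \in S & rk S y = k.
Proof.
move=> kS.
set s := map (rk S) (enum S).
have us : uniq s.
  rewrite map_inj_in_uniq ?enum_uniq // => x y; rewrite !mem_enum => xS yS e.
  apply/eqP; apply/negPn/negP=> nxy; have := lt_total nxy.
  case/orP=> h; [have := rk_lt xS h | have := rk_lt yS h]; by rewrite e ltnn.
have sub : {subset s <= iota 0 #|S|}.
  move=> z /mapP[x]; rewrite mem_enum => xS ->; rewrite mem_iota /= add0n.
  exact: rk_bound.
have [_ eqs] := uniq_min_size us sub (eq_leq (etrans (size_iota _ _) (etrans (cardE S) (esym (size_map _ _))))).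
have : k \in s by rewrite eqs mem_iota /= add0n.
by case/mapP=> y; rewrite mem_enum => yS ->; exists y.
Qed.
End Gen.
Section Ord.
Variables (R : realDomainType) (n : nat).
Implicit Types (p : profile R n) (x y z : 'I_n).

Lemma vb_irr p x : ~~ vbeats p x x.
Proof. by rewrite /vbeats ltxx eqxx ltnn. Qed.

Lemma vb_trans p x y z : vbeats p x y -> vbeats p y z -> vbeats p x z.
Proof.
rewrite /vbeats => /orP[h1|/andP[/eqP e1 h1]] /orP[h2|/andP[/eqP e2 h2]].
- by rewrite (lt_trans h2 h1).
- by rewrite -e2 h1.
- by rewrite e1 h2.
- by rewrite e1 e2 eqxx (ltn_trans h1 h2) orbT.
Qed.

Lemma vb_total p x y : x != y -> vbeats p x y || vbeats p y x.
Proof.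
move=> nxy; rewrite /vbeats; case: (ltgtP (p x).1 (p y).1) => //= e.
case: (ltngtP x y) => // exy.
by move: nxy; rewrite (val_inj exy) eqxx.
Qed.

Lemma vb_asym p x y : vbeats p x y -> ~~ vbeats p y x.
Proof. by move=> h; apply/negP=> h'; by have := vb_trans h h'; rewrite (negbTE (vb_irr _ _)). Qed.

Variable prio : {set 'I_n} -> nat.

Lemma pb_irr p x : ~~ pbeats prio p x x.
Proof. by rewrite /pbeats ltnn ltnn andbF. Qed.

Lemma pb_trans p x y z : pbeats prio p x y -> pbeats prio p y z -> pbeats prio p x z.
Proof. rewrite /pbeats; lia. Qed.

Lemma pb_total p x y : x != y -> pbeats prio p x y || pbeats prio p y x.
Proof.
move=> nxy; rewrite /pbeats; case: (ltngtP (prio (p x).2) (prio (p y).2)) => //= e.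
case: (ltngtP x y) => // exy.
by move: nxy; rewrite (val_inj exy) eqxx.
Qed.

Lemma pb_asym p x y : pbeats prio p x y -> ~~ pbeats prio p y x.
Proof. by move=> h; apply/negP=> h'; by have := pb_trans h h'; rewrite (negbTE (pb_irr _ _)). Qed.
End Ord.
Section Pot.
Variables (R : realDomainType) (n : nat).
Implicit Types (p : profile R n) (x y z : 'I_n) (S A W : {set 'I_n}).

Definition bts p S x := [set y in S | vbeats p y x].

Lemma bts_lt p S x y : x \in S -> vbeats p x y -> (#|bts p S x| < #|bts p S y|)%N.
Proof.
exact: (@rk_lt n (fun a b => vbeats p a b) (@vb_irr R n p) (@vb_trans R n p)).
Qed.

Lemma bts_D1 p S i x : i \in S ->
  #|bts p S x| = (vbeats p i x + #|[set y in S | (y != i) && vbeats p y x]|)%N.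
Proof.
move=> iS; rewrite (cardsD1 i) [i \in bts _ _ _]inE iS /=; congr (_ + _)%N.
by apply: eq_card=> y; rewrite !inE; case: (y \in S); case: (y != i).
Qed.

Lemma topk_char p k S i x : i \in S -> (#|bts p S i| < k)%N -> x \in S -> x != i ->
  (#|bts p S x| < k)%N = (#|[set y in S | (y != i) && vbeats p y x]| < k.-1)%N.
Proof.
move=> iS hi xS nxi.
case: (boolP (vbeats p i x)) => hix /=.
  rewrite (bts_D1 _ _ iS) hix /=; case: k hi => //.
have hxi : vbeats p x i by move: (vb_total p nxi); rewrite (negbTE hix) orbF.
have h0 := bts_lt xS hxi.
move: h0 hi; rewrite !(bts_D1 _ _ iS) (negbTE hix) (negbTE (vb_irr _ _)) !add0n.
move: (#|[set y in S | _ & vbeats p y x]|) (#|[set y in S | _ & vbeats p y i]|) => a b h0 hi.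
apply/idP/idP=> _; lia.
Qed.

Lemma in_topk p k S x : (x \in topk p k S) = (x \in S) && (#|bts p S x| < k)%N.
Proof. by rewrite inE. Qed.

Lemma pot_i p m A W i : i \notin W ->
  (i \in potential p m A W) =
  (i \in A) && ((#|A :\: W| <= m - #|W|)%N || (#|bts p (A :\: W) i| < m - #|W|)%N).
Proof.
move=> iW; rewrite /potential; case: ifP => h; first by rewrite andbT.
by rewrite in_setU (negbTE iW) in_topk inE iW.
Qed.

Variables (i : 'I_n) (pD pT : profile R n).
Hypothesis agree : forall j, j != i -> pD j = pT j.

Lemma vb_agree x y : x != i -> y != i -> vbeats pD x y = vbeats pT x y.
Proof. by move=> xi yi; rewrite /vbeats !agree. Qed.

Lemma potK m A W :
  (i \in A :\: W -> i \in potential pD m A W /\ i \in potential pT m A W) ->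
  potential pD m A W = potential pT m A W.
Proof.
move=> H; rewrite /potential; case: ifP => // hs; congr (_ :|: _).
set S := A :\: W; set k := (m - #|W|)%N.
have [iS|iS] := boolP (i \in S).
  have [hD hT] := H iS.
  move: iS; rewrite inE => /andP[iW iA].
  have giD : (#|bts pD S i| < k)%N by move: hD; rewrite pot_i // hs iA.
  have giT : (#|bts pT S i| < k)%N by move: hT; rewrite pot_i // hs iA.
  have iS : i \in S by rewrite inE iW iA.
  apply/setP=> x; rewrite !in_topk; case: (boolP (x \in S)) => //= xS.
  have [->|nxi] := eqVneq x i; first by rewrite giD giT.
  rewrite (topk_char iS giD xS nxi) (topk_char iS giT xS nxi).
  congr (_ < _)%N; apply: eq_card=> y; rewrite !inE.
  by case: (boolP (y != i)) => //= yi; rewrite vb_agree.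
apply/setP=> x; rewrite !in_topk; case: (boolP (x \in S)) => //= xS.
have xi : x != i by apply: contraNneq iS => <-.
congr (_ < _)%N; apply: eq_card=> y; rewrite !inE.
have [->|yi] := eqVneq y i; last by rewrite vb_agree.
by move: iS; rewrite inE; case: (i \in W); case: (i \in A).
Qed.

Lemma toexpK m A W : i \notin W ->
  (i \in A :\: W -> i \in potential pD m A W /\ i \in potential pT m A W) ->
  to_expand pD m A W = to_expand pT m A W.
Proof. by move=> iW H; rewrite /to_expand potK. Qed.
End Pot.
Section Clos.
Variables (R : realDomainType) (n : nat).
Implicit Types (p : profile R n) (x y z : 'I_n) (S A W : {set 'I_n}).

Lemma closure_sub f p m A W : A \subset Defs.closure f p m A W.
Proof.
elim: f A => [|f IH] A //=; case: pickP => [x _|_] //.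
exact: subset_trans (subsetUl _ _) (IH _).
Qed.

Definition cntP (i : 'I_n) (Pr : pred 'I_n) A W := #|[set y in A :\: W | (y != i) && Pr y]|.
Definition Rel m i A W A' W' := forall Pr : pred 'I_n,
  (cntP i Pr A W + (m - #|W'|) <= cntP i Pr A' W' + (m - #|W|))%N.

Lemma Rel_refl m i A W : Rel m i A W A W.
Proof. by move=> Pr. Qed.

Lemma Rel_trans m i A W A' W' A'' W'' :
  Rel m i A W A' W' -> Rel m i A' W' A'' W'' -> Rel m i A W A'' W''.
Proof. by move=> h1 h2 Pr; have := h1 Pr; have := h2 Pr; lia. Qed.

Lemma Rel_A m i A W A' : A \subset A' -> Rel m i A W A' W.
Proof.
move=> sA Pr; rewrite leq_add2r; apply: subset_leq_card; apply/subsetP=> y.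
by rewrite !inE => /andP[/andP[-> yA] ->]; rewrite (subsetP sA).
Qed.

Lemma Rel_w m i A W w : w \in A :\: W -> (#|W| < m)%N -> Rel m i A W A (w |: W).
Proof.
move=> wS Wm Pr; have wW : w \notin W by move: wS; rewrite inE => /andP[].
rewrite cardsU1 wW /=.
have : (cntP i Pr A W <= (cntP i Pr A (w |: W)).+1)%N.
  rewrite /cntP; set S' := [set y in A :\: (w |: W) | _].
  apply: leq_trans (subset_leq_card (_ : _ \subset w |: S')) _.
    apply/subsetP => y; rewrite !inE; have [->|ywn] := eqVneq y w => //=.
  by rewrite cardsU1; case: (w \notin S').
move: (cntP i Pr A W) (cntP i Pr A (w |: W)) (#|W|) Wm => a b c Wm; lia.
Qed.

Lemma cnt_all i A W : i \in A :\: W -> #|A :\: W| = (cntP i predT A W).+1.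
Proof.
move=> iS; rewrite (cardsD1 i) iS add1n; congr _.+1; apply: eq_card => y.
by rewrite !inE; case: (y != i); case: (y \in W); case: (y \in A).
Qed.

Lemma cnt_bts p i A W : cntP i (fun y => vbeats p y i) A W = #|bts p (A :\: W) i|.
Proof.
apply: eq_card => y; rewrite !inE.
have [->|//] := eqVneq y i; by rewrite (negbTE (vb_irr _ _)) !andbF.
Qed.

Lemma pot_mono p m i A W A' W' : Rel m i A W A' W' -> i \in A :\: W -> i \in A' :\: W' ->
  i \in potential p m A' W' -> i \in potential p m A W.
Proof.
move=> hR iS iS'; have iW : i \notin W by move: iS; rewrite inE => /andP[].
have iW' : i \notin W' by move: iS'; rewrite inE => /andP[].
have iA : i \in A by move: iS; rewrite inE => /andP[].
rewrite !pot_i // iA /= => /andP[_ h]; apply/negPn/negP.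
rewrite negb_or -ltnNge -leqNgt => /andP[h1 h2]; move: h.
have := hR predT; have := hR (fun y => vbeats p y i).
rewrite (cnt_all iS) (cnt_all iS') -!cnt_bts in h1 h2 *.
move: h1 h2; move: (cntP i predT A W) (cntP i predT A' W') (cntP i (vbeats p^~ i) A W)
  (cntP i (vbeats p^~ i) A' W') (#|W|) (#|W'|) => a b c d e f; lia.
Qed.

Variable prio : {set 'I_n} -> nat.

Lemma top_someP p S x : top_prio prio p S = Some x ->
  x \in S /\ forall y, y \in S -> (y == x) || pbeats prio p x y.
Proof.
rewrite /top_prio; case: pickP => // y /andP[yS /forallP h] [<-]; split => // z zS.
by have := h z; rewrite zS.
Qed.

Lemma top_exists p S x : x \in S -> exists y, top_prio prio p S = Some y.
Proof.
move=> xS; rewrite /top_prio; case: pickP => [y _|none]; first by exists y.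
have kS : (0 < #|S|)%N by apply/card_gt0P; exists x.
have [y yS ry] := @rk_exists n (fun a b => pbeats prio p a b) (@pb_irr R n prio p)
  (@pb_trans R n prio p) (@pb_total R n prio p) S 0 kS.
have := none y; rewrite yS /=; move/negP; elim; apply/forallP => z; apply/implyP=> zS.
have [//|nzy] := eqVneq z y; rewrite /=.
have : z \notin [set z in S | pbeats prio p z y].
  by apply/negP => h; move: ry; rewrite /rk (cardD1 z) h.
rewrite inE zS /= => nb; have := pb_total prio p nzy; rewrite (negbTE nb) /=; exact.
Qed.
End Clos.
Section Loop.
Variables (R : realDomainType) (n : nat) (prio : {set 'I_n} -> nat).
Implicit Types (p : profile R n) (x y z : 'I_n) (S A W : {set 'I_n}).

Lemma pot_sub p m A W : W \subset A -> potential p m A W \subset A.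
Proof.
move=> WA; rewrite /potential; case: ifP => // _; rewrite subUset WA /=.
by apply/subsetP=> x; rewrite inE => /andP[]; rewrite inE => /andP[].
Qed.

Lemma pot_m p m A W w : W \subset A -> w \in potential p m A W :\: W -> (#|W| < m)%N.
Proof.
move=> WA; rewrite /potential; case: ifP => h; rewrite inE => /andP[wW].
  move=> wA; have : (0 < #|A :\: W|)%N by apply/card_gt0P; exists w; rewrite inE wW.
  move: h; move: (#|A :\: W|) (#|W|) => a b; lia.
rewrite inE (negbTE wW) /= inE => /andP[_ h2].
move: h2; move: (#|_|) (#|W|) => a b; lia.
Qed.

Definition price p m A W : R :=
  if (#|A :\: W| <= m - #|W|)%N then 0 else kth_val p (m - #|W|) (A :\: W).

Lemma loopS f p m A W pay : mudan_loop f.+1 prio p m A W pay =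
  match top_prio prio p (potential p m (Defs.closure n.+1 p m A W) W :\: W) with
  | None => (W, pay)
  | Some w => mudan_loop f prio p m (Defs.closure n.+1 p m A W) (w |: W)
      (fun j => if j == w then price p m (Defs.closure n.+1 p m A W) W else pay j)
  end.
Proof. by []. Qed.

Lemma loop_W f p m A W pay : W \subset (mudan_loop f prio p m A W pay).1.
Proof.
elim: f A W pay => [|f IH] A W pay //=.
case: (top_prio _ _ _) => [w|] //=.
exact: subset_trans (subsetUr _ _) (IH _ _ _).
Qed.

Lemma loop_pay f p m A W pay j : j \in W -> (mudan_loop f prio p m A W pay).2 j = pay j.
Proof.
elim: f A W pay => [|f IH] A W pay //= jW.
case e: (top_prio _ _ _) => [w|] //=.
have [wS _] := top_someP e.
rewrite IH ?inE ?jW ?orbT //; case: eqP => // ejw.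
by move: wS; rewrite inE -ejw jW.
Qed.

Lemma single_run f p m A W pay i : W \subset A -> i \notin W ->
  i \in (mudan_loop f prio p m A W pay).1 ->
  exists A', exists W', [/\ Rel m i (Defs.closure n.+1 p m A W) W A' W',
    i \in A' :\: W', i \in potential p m A' W', W' \subset A' &
    (mudan_loop f prio p m A W pay).2 i = price p m A' W'].
Proof.
elim: f A W pay => [|f IH] A W pay WA iW; first by rewrite /= (negbTE iW).
rewrite loopS; set A1 := Defs.closure n.+1 p m A W.
have WA1 : W \subset A1 := subset_trans WA (closure_sub _ _ _ _ _).
case e: (top_prio _ _ _) => [w|]; last by rewrite /= (negbTE iW).
have [wS _] := top_someP e.
have wA1 : w \in A1 by move: wS; rewrite inE => /andP[_ /(subsetP (pot_sub _ _ WA1))].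
have [<-|nwi] := eqVneq w i.
  move=> _; exists A1, W; split => //.
  - by move: wS; rewrite !inE => /andP[-> _].
  - by move: wS; rewrite inE => /andP[].
  - by rewrite loop_pay ?inE ?eqxx // /price.
have WA2 : w |: W \subset A1 by rewrite subUset sub1set wA1.
have iW2 : i \notin w |: W.
  by rewrite !inE negb_or iW andbT; apply: contraNneq nwi => ->.
move=> hin; have := IH _ _ _ WA2 iW2 hin.
move=> [A' [W' [hR h1 h2 h3 h4]]]; exists A', W'; split => //.
apply: Rel_trans (Rel_w _ _ _) (Rel_trans (Rel_A _ _ _ (closure_sub _ _ _ _ _)) hR).
  by move: wS; rewrite !inE => /andP[-> /(subsetP (pot_sub _ _ WA1))].
exact: pot_m wS.
Qed.

Lemma kth_spec p m A W i : i \in A :\: W -> i \in potential p m A W ->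
  ~~ (#|A :\: W| <= m - #|W|)%N ->
  exists y, [/\ y \in A :\: W, y != i, #|bts p (A :\: W) y| = (m - #|W|)%N,
     vbeats p i y & price p m A W = (p y).1].
Proof.
move=> iS ip hs; have iW : i \notin W by move: iS; rewrite inE => /andP[].
have iA : i \in A by move: iS; rewrite inE => /andP[].
move: ip; rewrite pot_i // iA (negbTE hs) /= => hi.
rewrite /price (negbTE hs) /kth_val; case: pickP => [y /andP[yS /eqP hy]|none].
  have hy' : #|bts p (A :\: W) y| = (m - #|W|)%N by [].
  have yi : y != i by apply: contraTneq hi => <-; rewrite hy' ltnn.
  exists y; split => //.
  have := vb_total p yi; case/orP => // hyi.
  have h := bts_lt yS hyi; rewrite hy' in h; exfalso.
  by move: h hi; move: (#|bts p (A :\: W) i|) (m - #|W|)%N => a b; lia.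
have kS : (m - #|W| < #|A :\: W|)%N by rewrite ltnNge.
have [y yS hy] := @rk_exists n (fun a b => vbeats p a b) (@vb_irr R n p)
  (@vb_trans R n p) (@vb_total R n p) (A :\: W) (m - #|W|) kS.
by have := none y; move: hy; rewrite /rk yS /= => ->; rewrite eqxx.
Qed.

Lemma price_le p m A W i : i \in A :\: W -> i \in potential p m A W ->
  0 <= (p i).1 -> price p m A W <= (p i).1.
Proof.
move=> iS ip h0; case: (boolP (#|A :\: W| <= m - #|W|)%N) => hs.
  by rewrite /price hs.
have [y [_ _ _ hiy ->]] := kth_spec iS ip hs.
move: hiy; rewrite /vbeats => /orP[/ltW //|/andP[/eqP -> _]] //.
Qed.

Lemma price_ge0 p m A W i : (forall j, j != i -> 0 <= (p j).1) ->
  i \in A :\: W -> i \in potential p m A W -> 0 <= price p m A W.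
Proof.
move=> h0 iS ip; case: (boolP (#|A :\: W| <= m - #|W|)%N) => hs.
  by rewrite /price hs.
by have [y [_ yi _ _ ->]] := kth_spec iS ip hs; apply: h0.
Qed.

Lemma IR f p m A W pay i : W \subset A -> i \notin W -> 0 <= (p i).1 ->
  i \in (mudan_loop f prio p m A W pay).1 ->
  (mudan_loop f prio p m A W pay).2 i <= (p i).1.
Proof.
move=> WA iW h0 /(single_run WA iW) [A' [W' [_ h1 h2 _ ->]]].
exact: price_le.
Qed.
End Loop.
Section Main.
Variables (R : realDomainType) (n : nat) (prio : {set 'I_n} -> nat) (m : nat).
Variables (i : 'I_n) (pD pT : profile R n).
Hypothesis agree : forall j, j != i -> pD j = pT j.
Hypothesis hmono : (prio (pD i).2 <= prio (pT i).2)%N.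
Hypothesis nonneg : forall j, j != i -> 0 <= (pD j).1.
Hypothesis vi0 : 0 <= (pT i).1.
Implicit Types (p : profile R n) (x y z : 'I_n) (S A W : {set 'I_n}).

Definition Good A W :=
  i \in A :\: W -> i \in potential pD m A W /\ i \in potential pT m A W.

Lemma notin_toexp p A W : i \notin W -> (i \in A :\: W -> i \in potential p m A W) ->
  i \notin to_expand p m A W.
Proof.
move=> iW h; rewrite /to_expand !inE (negbTE iW) /=.
apply/negP => /andP[ip iA]; have := h; rewrite !inE iW iA => /(_ isT).
by rewrite (negbTE ip).
Qed.

Lemma closure_sync f A W : i \notin W ->
  (forall A', A \subset A' -> A' \subset Defs.closure f pD m A W -> Good A' W) ->
  Defs.closure f pD m A W = Defs.closure f pT m A W.
Proof.
elim: f A => [//|f IH] A iW H.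
have H0 : Good A W := H A (subxx A) (closure_sub _ _ _ _ _).
have eT := toexpK agree iW H0.
have niE : i \notin to_expand pD m A W by apply: notin_toexp => // /H0 [].
have ep : [pick x in to_expand pT m A W | ~~ ((pT x).2 \subset A)] =
          [pick x in to_expand pD m A W | ~~ ((pD x).2 \subset A)].
  rewrite -eT; apply: eq_pick => x /=; case: (boolP (x \in to_expand pD m A W)) => //= xE.
  by rewrite agree //; apply: contraNneq niE => <-.
move: H; rewrite /= ep; case: pickP => [x /andP[xE _]|] H //.
have xi : x != i by apply: contraNneq niE => <-.
rewrite -(agree xi); apply: IH => // A' sA' sA''; apply: H => //.
exact: subset_trans (subsetUl _ _) sA'.
Qed.

Lemma potT A W : i \in A :\: W -> i \in potential pD m A W ->
  price pD m A W < (pT i).1 -> i \in potential pT m A W.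
Proof.
move=> iS ip hlt; have iW : i \notin W by move: iS; rewrite inE => /andP[].
have iA : i \in A by move: iS; rewrite inE => /andP[].
rewrite pot_i // iA /=; case: (boolP (#|A :\: W| <= m - #|W|)%N) => //= hs.
have [y [yS yi hy hiy hpr]] := kth_spec iS ip hs.
rewrite -hy; apply: (@leq_ltn_trans #|bts pD (A :\: W) y :\ i|).
  apply: subset_leq_card; apply/subsetP => z; rewrite !inE => /andP[zS hz].
  have zi : z != i by apply: contraTneq hz => ->; rewrite vb_irr.
  rewrite zi zS /=; move: hz; rewrite /vbeats -(agree zi) => /orP[h|/andP[/eqP h _]].
    by rewrite (lt_trans _ h) // -hpr.
  by rewrite h -hpr hlt.
by apply: proper_card; apply: properD1; rewrite inE iS hiy.
Qed.

Lemma price_cmp A W A' W' : Rel m i A W A' W' -> i \in A :\: W -> i \in A' :\: W' ->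
  i \in potential pT m A W -> i \in potential pD m A' W' ->
  price pT m A W <= price pD m A' W'.
Proof.
move=> hR iS iS' ipT ipD.
case: (boolP (#|A :\: W| <= m - #|W|)%N) => hs.
  rewrite /price hs; apply: price_ge0 ipD => //.
have hs' : ~~ (#|A' :\: W'| <= m - #|W'|)%N.
  move: hs; have := hR predT; rewrite (cnt_all iS) (cnt_all iS') -!ltnNge.
  move: (cntP _ _ A W) (cntP _ _ A' W') #|W| #|W'| => a b c d; lia.
have [yT [yS yTi hyT hiyT ->]] := kth_spec iS ipT hs.
have [yD [yS' yDi hyD hiyD ->]] := kth_spec iS' ipD hs'.
rewrite leNgt; apply/negP => hc.
set c := (pD yD).1 in hc.
have := hR (fun z => c < (pD z).1).
have c1 : (m - #|W| <= cntP i (fun z => (c < (pD z).1)%R) A W)%N.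
  rewrite -hyT; apply: (@leq_trans #|yT |: (bts pT (A :\: W) yT :\ i)|).
    rewrite cardsU1 (cardsD1 i (bts _ _ _)) [i \in bts _ _ _]inE iS hiyT.
    have -> : yT \notin bts pT (A :\: W) yT :\ i.
      by rewrite !inE (negbTE (vb_irr _ _)) !andbF.
    by [].
  apply: subset_leq_card; apply/subsetP => z; rewrite !inE.
  case/orP => [/eqP ->|/andP[zi /andP[zS hz]]].
    by move: (yS); rewrite inE => ->; rewrite yTi (agree yTi) hc.
  rewrite zS zi /= (agree zi); move: hz; rewrite /vbeats => /orP[h|/andP[/eqP h _]].
    exact: lt_trans hc h.
  by rewrite h.
have c2 : (cntP i (fun z => (c < (pD z).1)%R) A' W' < m - #|W'|)%N.
  rewrite -hyD; apply: (@leq_trans #|bts pD (A' :\: W') yD :\ i|.+1).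
    rewrite ltnS; apply: subset_leq_card; apply/subsetP => z; rewrite !inE.
    by move=> /and3P[zS zi hz]; rewrite zi zS /= /vbeats; apply/orP; left.
  by rewrite (cardsD1 i (bts _ _ _)) [i \in bts _ _ _]inE iS' hiyD.
move: c1 c2; move: (cntP _ _ A W) (cntP _ _ A' W') (m - #|W|)%N (m - #|W'|)%N => a b d e.
lia.
Qed.

Definition util (res : {set 'I_n} * ('I_n -> R)) : R :=
  (if i \in res.1 then (pT i).1 else 0) - (if i \in res.1 then res.2 i else 0).

Lemma util_ge0 f A W pay : W \subset A -> i \notin W ->
  0 <= util (mudan_loop f prio pT m A W pay).
Proof.
move=> WA iW; rewrite /util; case: ifP => hin; last by rewrite subrr.
by rewrite subr_ge0; apply: IR.
Qed.

Lemma pb_DT x : pbeats prio pD i x -> x != i -> pbeats prio pT i x.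
Proof.
move=> h xi; move: h hmono; rewrite /pbeats (agree xi).
move: (prio (pD i).2) (prio (pT i).2) (prio (pT x).2) => a b c; lia.
Qed.

Lemma main f A W payD payT : W \subset A -> i \notin W ->
  util (mudan_loop f prio pD m A W payD) <= util (mudan_loop f prio pT m A W payT).
Proof.
elim: f A W payD payT => [|f IH] A W payD payT WA iW.
  by rewrite /util /= (negbTE iW).
have hT0 := util_ge0 (f.+1) payT WA iW.
case hin: (i \in (mudan_loop f.+1 prio pD m A W payD).1); last first.
  by rewrite {1}/util hin subrr.
have [A' [W' [hR iS' ipD W'A' hpay]]] := single_run WA iW hin.
have utilD : util (mudan_loop f.+1 prio pD m A W payD) = (pT i).1 - price pD m A' W'.
  by rewrite /util hin hpay.
case: (leP (pT i).1 (price pD m A' W')) => hc.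
  by rewrite utilD; apply: le_trans hT0; rewrite subr_le0.
have ipT' := potT iS' ipD hc.
set A1 := Defs.closure n.+1 pD m A W in hR.
have good : forall Ac : {set 'I_n}, A \subset Ac -> Ac \subset A1 -> Good Ac W.
  move=> Ac _ sAc iSc; have hR' := Rel_trans (Rel_A m i W sAc) hR.
  by split; [exact: pot_mono hR' iSc iS' ipD | exact: pot_mono hR' iSc iS' ipT'].
have ecl : A1 = Defs.closure n.+1 pT m A W := closure_sync iW good.
have gA1 : Good A1 W := good A1 (closure_sub _ _ _ _ _) (subxx _).
have ep := potK agree gA1.
have WA1 : W \subset A1 := subset_trans WA (closure_sub _ _ _ _ _).
rewrite loopS in utilD hin; rewrite !loopS -ecl -ep -/A1.
rewrite -/A1 in utilD hin.
set S := potential pD m A1 W :\: W in utilD hin *.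
case eD: (top_prio prio pD S) => [wD|]; last by rewrite eD /= (negbTE iW) in hin.
rewrite eD in utilD hin *.
have [wDS wDtop] := top_someP eD.
have [wT eT] := top_exists prio pT wDS.
have [wTS wTtop] := top_someP eT.
rewrite eT.
have [ewT|nwT] := eqVneq wT i.
  rewrite utilD ewT /util loop_pay ?inE ?eqxx // (subsetP (loop_W _ _ _ _ _ _ _)) ?inE ?eqxx //.

  have iS1 : i \in A1 :\: W.
    by rewrite -ewT; move: wTS; rewrite !inE => /andP[-> /(subsetP (pot_sub _ _ WA1))].
  rewrite lerD2l lerN2; apply: (price_cmp hR iS1 iS' _ ipD).
  by have [_] := gA1 iS1.
have nwD : wD != i.
  apply/negP => /eqP ewD; rewrite ewD in wDS wDtop.
  have h1 : pbeats prio pT wT i by have := wTtop i wDS; rewrite eq_sym (negbTE nwT).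
  have h2 : pbeats prio pD i wT by have := wDtop wT wTS; rewrite (negbTE nwT).
  by have := pb_asym (pb_DT h2 nwT); rewrite h1.
have eW : wD = wT.
  apply/eqP/negPn/negP => nDT.
  have h1 : pbeats prio pT wT wD by have := wTtop wD wDS; rewrite (negbTE nDT).
  have h2 : pbeats prio pD wD wT by have := wDtop wT wTS; rewrite eq_sym (negbTE nDT).
  move: h2; rewrite /pbeats (agree nwD) (agree nwT) -/(pbeats prio pT wD wT) => h2.
  by have := pb_asym h1; rewrite h2.
rewrite -eW; apply: IH.
  by rewrite subUset sub1set WA1 andbT; move: wDS; rewrite inE => /andP[_ /(subsetP (pot_sub _ _ WA1))].
by rewrite !inE negb_or iW andbT eq_sym.
Qed.
End Main.
Section Sil.
Variables (R : realDomainType) (n : nat) (prio : {set 'I_n} -> nat) (m : nat).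
Variables (p q : profile R n) (X : {set 'I_n}).
Hypothesis agX : forall x, x \in X -> q x = p x.
Hypothesis clX : forall x, x \in X -> (p x).2 \subset X.
Implicit Types (x y z : 'I_n) (S A W : {set 'I_n}).

Lemma vbX x y : x \in X -> y \in X -> vbeats q x y = vbeats p x y.
Proof. by move=> xX yX; rewrite /vbeats !agX. Qed.

Lemma topkX k S : S \subset X -> topk q k S = topk p k S.
Proof.
move=> SX; apply/setP=> x; rewrite !inE; case: (boolP (x \in S)) => //= xS.
congr (_ < _)%N; apply: eq_card => y; rewrite !inE; case: (boolP (y \in S)) => //= yS.
by rewrite vbX // (subsetP SX).
Qed.

Lemma subDX A W : A \subset X -> A :\: W \subset X.
Proof. by move=> AX; apply: subset_trans AX; apply: subsetDl. Qed.

Lemma potX A W : A \subset X -> potential q m A W = potential p m A W.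
Proof. by move=> AX; rewrite /potential topkX // subDX. Qed.

Lemma toexp_sub (r : profile R n) A W : W \subset A -> to_expand r m A W \subset A.
Proof. by move=> WA; rewrite /to_expand subUset WA subDset subsetUr. Qed.

Lemma closureX f A W : W \subset A -> A \subset X ->
  Defs.closure f q m A W = Defs.closure f p m A W /\ Defs.closure f p m A W \subset X.
Proof.
elim: f A => [|f IH] A WA AX //=.
have ep : [pick x in to_expand q m A W | ~~ ((q x).2 \subset A)] =
          [pick x in to_expand p m A W | ~~ ((p x).2 \subset A)].
  rewrite /to_expand potX //; apply: eq_pick => x /=.
  case: (boolP (x \in _)) => //= xE; rewrite agX //.
  apply: (subsetP AX); apply: (subsetP (toexp_sub p WA)); exact: xE.
rewrite ep; case: pickP => [x /andP[xE _]|] //.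
have xX : x \in X by apply: (subsetP AX); apply: (subsetP (toexp_sub p WA)).
rewrite agX //; apply: IH.
  exact: subset_trans WA (subsetUl _ _).
by rewrite subUset AX clX.
Qed.

Lemma kthX k S : S \subset X -> kth_val q k S = kth_val p k S.
Proof.
move=> SX; rewrite /kth_val.
have -> : [pick y in S | #|[set z in S | vbeats q z y]| == k] =
          [pick y in S | #|[set z in S | vbeats p z y]| == k].
  apply: eq_pick => y /=; case: (boolP (y \in S)) => //= yS.
  congr (_ == _); apply: eq_card => z; rewrite !inE; case: (boolP (z \in S)) => //= zS.
  by rewrite vbX // (subsetP SX).
by case: pickP => [y /andP[yS _]|] //; rewrite agX // (subsetP SX).
Qed.

Lemma priceX A W : A \subset X -> price q m A W = price p m A W.
Proof. by move=> AX; rewrite /price kthX // subDX. Qed.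

Lemma topX S : S \subset X -> top_prio prio q S = top_prio prio p S.
Proof.
move=> SX; rewrite /top_prio; apply: eq_pick => x /=; case: (boolP (x \in S)) => //= xS.
apply: eq_forallb => y; case: (boolP (y \in S)) => //= yS.
by rewrite /pbeats !agX // (subsetP SX).
Qed.

Lemma loopX f A W pay : W \subset A -> A \subset X ->
  mudan_loop f prio q m A W pay = mudan_loop f prio p m A W pay.
Proof.
elim: f A W pay => [|f IH] A W pay WA AX //.
rewrite !loopS; have [-> A1X] := closureX n.+1 WA AX.
set A1 := Defs.closure n.+1 p m A W in A1X *.
have WA1 : W \subset A1 := subset_trans WA (closure_sub _ _ _ _ _).
rewrite potX // topX; last exact: subset_trans (subsetDl _ _) (subset_trans (pot_sub _ _ WA1) A1X).
case e: (top_prio _ _ _) => [w|] //.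
have [wS _] := top_someP e.
rewrite priceX // IH //.
by rewrite subUset sub1set WA1 andbT; move: wS; rewrite inE => /andP[_ /(subsetP (pot_sub _ _ WA1))].
Qed.
End Sil.

Section Reach.
Variables (R : realDomainType) (n : nat) (rs : {set 'I_n}) (p : profile R n).
Local Notation F := (reach_step rs p).

Lemma F_mono (X Y : {set 'I_n}) : X \subset Y -> F X \subset F Y.
Proof.
move=> XY; rewrite /reach_step setUS //; apply/subsetP => z /bigcupP[x xX zx].
by apply/bigcupP; exists x => //; apply: (subsetP XY).
Qed.

Lemma iter_chain k : iter k F set0 \subset iter k.+1 F set0.
Proof. by elim: k => [|k IH]; [exact: sub0set | exact: F_mono]. Qed.

Lemma iter_grow k : (k <= #|iter k F set0|)%N ||
  [exists j : 'I_k, iter j F set0 == iter j.+1 F set0].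
Proof.
elim: k => [//|k IH].
case/orP: IH => [hk|/existsP[j hj]]; last first.
  by apply/orP; right; apply/existsP; exists (widen_ord (leqnSn k) j).
case: (boolP (iter k F set0 == iter k.+1 F set0)) => e.
  by apply/orP; right; apply/existsP; exists ord_max.
apply/orP; left; apply: leq_ltn_trans hk _; apply: proper_card.
by rewrite properEneq e iter_chain.
Qed.

Lemma reach_fix : F (reachable rs p) = reachable rs p.
Proof.
have := iter_grow n.+1; case/orP => [h|/existsP[j /eqP hj]].
  by have := max_card (mem (iter n.+1 F set0)); rewrite card_ord => h2; move: (leq_trans h h2); rewrite ltnn.
move: (nat_of_ord j) (ltn_ord j) hj => {}j jlt hj.
have st : forall l, iter (j + l) F set0 = iter j F set0.
  elim=> [|l IH]; first by rewrite addn0.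
  by rewrite addnS iterS IH -iterS -hj.
have jn : (j <= n.+1)%N by apply: ltnW.
have e1 : iter n.+1 F set0 = iter j F set0 by rewrite -(subnKC jn) st.
have jn2 : (j <= n.+2)%N by apply: leq_trans jn _.
have e2 : iter n.+2 F set0 = iter j F set0 by rewrite -(subnKC jn2) st.
by rewrite /reachable -iterS e2 e1.
Qed.

Lemma reach_rs : rs \subset reachable rs p.
Proof. by rewrite -reach_fix /reach_step subsetUl. Qed.

Lemma reach_cl x : x \in reachable rs p -> (p x).2 \subset reachable rs p.
Proof.
move=> xX; rewrite -reach_fix /reach_step.
apply: subset_trans (subsetUr _ _); exact: bigcup_sup.
Qed.
End Reach.
Unset Implicit Arguments. Set Strict Implicit.

Theorem lemma2 (R : realDomainType) (n m : nat) (rs : {set 'I_n})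
  (prio : {set 'I_n} -> nat)
  (prio_mono : forall S T : {set 'I_n}, S \subset T -> (prio S <= prio T)%N)
  (theta : profile R n) :
  (1 <= m)%N ->
  (forall j, 0 <= (theta j).1) ->
  reachable rs theta = [set: 'I_n] ->
  forall (i : 'I_n) (theta' : profile R n) (rep'' : report R n),
  (forall j, j != i -> 0 <= (theta' j).1 /\ (theta' j).2 \subset (theta j).2) ->
  0 <= rep''.1 -> rep''.2 \subset (theta i).2 ->
  utility (theta i).1 i
      (mudan prio rs m (silence_unreach rs (upd theta' i rep'') i))
  <= utility (theta i).1 i (mudan prio rs m (upd theta' i (theta i))).
Proof.
move=> _ th0 _ i theta' rep'' hoth _ hsub.
set pD := upd theta' i rep''; set pT := upd theta' i (theta i).
have eD : mudan prio rs m (silence_unreach rs pD i) = mudan prio rs m pD.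
  rewrite /mudan (@loopX R n prio m pD _ (reachable rs pD)) //.
  - by move=> x xX; rewrite /silence_unreach xX orbT.
  - exact: reach_cl.
  - exact: sub0set.
  - exact: reach_rs.
rewrite eD.
have agree : forall j, j != i -> pD j = pT j.
  by move=> j ji; rewrite /pD /pT /upd (negbTE ji).
have hmono : (prio (pD i).2 <= prio (pT i).2)%N.
  by rewrite /pD /pT /upd eqxx; apply: prio_mono.
have nonneg : forall j, j != i -> 0 <= (pD j).1.
  by move=> j ji; rewrite /pD /upd (negbTE ji); case: (hoth j ji).
have vi0 : 0 <= (pT i).1 by rewrite /pT /upd eqxx.
have iW0 : i \notin (set0 : {set 'I_n}) by rewrite in_set0.
have := @main R n prio m i pD pT agree hmono nonneg vi0 n.+1 rs set0 (fun _ => 0) (fun _ => 0)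
  (sub0set _) iW0.
have vi : (pT i).1 = (theta i).1 by rewrite /pT /upd eqxx.
rewrite /util vi; exact.
Qed.
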